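(* Let $m\ge 2$. If the Fibonacci sequence is defective mod $m$, then every Gibonacci sequence $\{G_n(a,b)\}$ (with $\gcd(a,b)=1$) is defective mod $m$.
   Context: For integers $a,b$ with $\gcd(a,b)=1$, the Gibonacci sequence $\{G_n(a,b)\}_{n\ge1}$ is defined by $G_1=a$, $G_2=b$, $G_{n+1}=G_{n-1}+G_n$. The Fibonacci sequence is $F_n=G_n(1,1)$. A sequence is complete mod $m$ if every residue class modulo $m$ contains some term of the sequence, and defective mod $m$ otherwise. *)

(* Defs.v *)
From HB Require Import structures.
From mathcomp Require Import all_boot all_order all_algebra.
Set Implicit Arguments. Unset Strict Implicit. Unset Printing Implicit Defensive.
Import Order.TTheory GRing.Theory Num.Theory.
Local Open Scope ring_scope.

(* gib a b n = G_{n+1}(a,b) : gib a b 0 = G_1 = a, gib a b 1 = G_2 = b. *)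
Fixpoint gib_aux (a b : int) (n : nat) : int * int :=
  match n with
  | 0%N => (a, b)
  | n'.+1 => let p := gib_aux a b n' in (p.2, p.1 + p.2)
  end.

Definition gib (a b : int) (n : nat) : int := (gib_aux a b n).1.

(* G_n(a,b) for n >= 1 (paper indexing). *)
Definition G (a b : int) (n : nat) : int := gib a b n.-1.

Definition complete_mod (s : nat -> int) (m : int) : Prop :=
  forall r : int, exists n : nat, (1 <= n)%N /\ (s n = r %[mod m])%Z.

Definition defective_mod (s : nat -> int) (m : int) : Prop :=
  ~ complete_mod s m.

Definition Fib (n : nat) : int := G 1 1 n.

(* Main.v *)
Require Import Defs.
From HB Require Import structures.
From mathcomp Require Import all_boot all_order all_algebra.
From mathcomp Require Import ring.
Import Order.TTheory GRing.Theory Num.Theory.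
Local Open Scope ring_scope.

Lemma gib0 a b : gib a b 0 = a. Proof. by []. Qed.
Lemma gib1 a b : gib a b 1 = b. Proof. by []. Qed.
Lemma gibSS a b n : gib a b n.+2 = gib a b n + gib a b n.+1.
Proof. by rewrite /gib /=. Qed.

Lemma two_ind (P : nat -> Prop) : P 0%N -> P 1%N ->
  (forall n, P n -> P n.+1 -> P n.+2) -> forall n, P n.
Proof.
move=> h0 h1 hS n; suff: P n /\ P n.+1 by case.
elim: n => [|n [IH1 IH2]]; first by split.
by split => //; apply: hS.
Qed.

Lemma gib_shift a b n k :
  gib a b (n + k) = gib (gib a b n) (gib a b n.+1) k.
Proof.
elim/two_ind: k => [||k IH1 IH2]; first by rewrite addn0.
  by rewrite addn1.
by rewrite !addnS gibSS -addnS IH1 IH2 gibSS.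
Qed.

Lemma gib_lin x y k : gib x y k = x * gib 1 0 k + y * gib 0 1 k.
Proof.
elim/two_ind: k => [||k IH1 IH2].
- by rewrite gib0 gib0 mulr1 mulr0 addr0.
- by rewrite !gib1 mulr0 mulr1 add0r.
by rewrite !gibSS IH1 IH2 !mulrDr addrACA.
Qed.

Lemma gib_gcd a b n : gcdz (gib a b n) (gib a b n.+1) = gcdz a b.
Proof.
elim: n => [//|n IH].
by rewrite gibSS gcdzDr gcdzC.
Qed.

Section Cong.
Variable m : int.
Definition cong x y := (m %| x - y)%Z.

Lemma cong_refl x : cong x x. Proof. by rewrite /cong subrr dvdz0. Qed.
Lemma cong_trans x y z : cong x y -> cong y z -> cong x z.
Proof.
rewrite /cong => h1 h2.
have -> : x - z = (x - y) + (y - z) by rewrite addrA subrK.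
exact: rpredD.
Qed.
Lemma cong_add x y x' y' : cong x x' -> cong y y' -> cong (x + y) (x' + y').
Proof.
rewrite /cong => h1 h2.
have -> : x + y - (x' + y') = (x - x') + (y - y') by rewrite opprD addrACA.
exact: rpredD.
Qed.
Lemma cong_sub x y x' y' : cong x x' -> cong y y' -> cong (x - y) (x' - y').
Proof.
rewrite /cong => h1 h2.
have -> : x - y - (x' - y') = (x - x') - (y - y') by ring.
exact: rpredB.
Qed.
End Cong.

Lemma gib_back (m a b : int) i j : (i <= j)%N ->
  cong m (gib a b i) (gib a b j) -> cong m (gib a b i.+1) (gib a b j.+1) ->
  cong m (gib a b 0) (gib a b (j - i)) /\ cong m (gib a b 1) (gib a b (j - i).+1).
Proof.
elim: i j => [|i IH] j hij h1 h2; first by rewrite subn0.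
case: j hij h1 h2 => [//|j] hij h1 h2.
rewrite subSS; apply: IH => //.
have -> : gib a b i = gib a b i.+2 - gib a b i.+1 by rewrite gibSS addrK.
have -> : gib a b j = gib a b j.+2 - gib a b j.+1 by rewrite gibSS addrK.
exact: cong_sub.
Qed.

Lemma gib_fwd (m a b : int) P :
  cong m (gib a b 0) (gib a b P) -> cong m (gib a b 1) (gib a b P.+1) ->
  forall t, cong m (gib a b t) (gib a b (t + P)).
Proof.
move=> h0 h1 t; suff: cong m (gib a b t) (gib a b (t + P)) /\
    cong m (gib a b t.+1) (gib a b (t + P).+1) by case.
elim: t => [|t [IH1 IH2]]; first by rewrite add0n.
split; first by rewrite addSn.
by rewrite addSn !gibSS; apply: cong_add.
Qed.

Lemma gib_fwdq (m a b : int) P :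
  cong m (gib a b 0) (gib a b P) -> cong m (gib a b 1) (gib a b P.+1) ->
  forall q t, cong m (gib a b t) (gib a b (t + q * P)).
Proof.
move=> h0 h1; elim=> [|q IH] t; first by rewrite mul0n addn0 cong_refl.
rewrite mulSn addnA.
apply: cong_trans (IH (t + P)%N).
by apply: gib_fwd.
Qed.

From mathcomp Require Import zify.

Lemma res_lt (m : nat) (x : int) : (0 < m)%N -> (`|(x %% m%:Z)%Z|%N < m)%N.
Proof.
move=> hm.
have h1 := @ltz_pmod x m%:Z. have h2 := @modz_ge0 x m%:Z.
lia.
Qed.

Lemma res_eq (m : nat) (x y : int) : (0 < m)%N ->
  `|(x %% m%:Z)%Z|%N = `|(y %% m%:Z)%Z|%N -> cong m%:Z x y.
Proof.
move=> hm h.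
have h1 := @modz_ge0 x m%:Z. have h2 := @modz_ge0 y m%:Z.
rewrite /cong -eqz_mod_dvd; apply/eqP.
lia.
Qed.

Lemma gib_period (m : nat) (a b : int) : (0 < m)%N ->
  exists2 P, (0 < P)%N & cong m%:Z (gib a b 0) (gib a b P) /\
                         cong m%:Z (gib a b 1) (gib a b P.+1).
Proof.
move=> hm.
pose f (i : 'I_(m * m).+1) : 'I_m * 'I_m :=
  (Ordinal (@res_lt m (gib a b i) hm), Ordinal (@res_lt m (gib a b i.+1) hm)).
have : [exists i : 'I_(m * m).+1, exists j : 'I_(m * m).+1, (i < j)%N && (f i == f j)].
  apply: contraT => /negP hn.
  have finj : injective f.
    move=> i j hij; apply/eqP; apply/negPn/negP => hne.
    case: (ltngtP i j) => hlt.
    - by apply: hn; apply/existsP; exists i; apply/existsP; exists j; rewrite hlt hij eqxx.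
    - by apply: hn; apply/existsP; exists j; apply/existsP; exists i; rewrite hlt hij eqxx.
    - by move/negP: hne; apply; apply/eqP; apply: val_inj.
  have := @leq_card _ _ f finj.
  by rewrite card_prod !card_ord ltnn.
case/existsP => i /existsP [j /andP [hij /eqP hf]].
have [e1 e2] : (`|(gib a b i %% m%:Z)%Z|%N = `|(gib a b j %% m%:Z)%Z|%N) /\
  (`|(gib a b i.+1 %% m%:Z)%Z|%N = `|(gib a b j.+1 %% m%:Z)%Z|%N).
  by move: hf; rewrite /f => -[-> ->].
exists (j - i)%N; first by rewrite subn_gt0.
apply: gib_back; first exact: ltnW.
  exact: res_eq.
exact: res_eq.
Qed.

Lemma Fib_gib k : (1 <= k)%N -> Fib k = gib 0 1 k.
Proof.
case: k => [//|k] _.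
by rewrite /Fib /G /= -add1n gib_shift.
Qed.

Theorem mainTheorem4 (m : nat) (hm : (2 <= m)%N) :
  defective_mod Fib m%:Z ->
  forall a b : int, gcdz a b = 1%N -> defective_mod (G a b) m%:Z.
Proof.
move=> hF a b hab hG; apply: hF => r.
have hm0 : (0 < m)%N by apply: leq_trans hm.
have [n0 [hn0 e0]] := hG 0.
have [j0 [hj0 ej]] := hG (gib a b n0 * r).
set n := n0.-1 in e0 ej *.
have hn : n0 = n.+1 by rewrite /n prednK.
rewrite hn in ej.
set x := gib a b n in e0.
set c := gib a b n.+1 in ej.
set j := j0.-1.
have ej' : cong m%:Z (gib a b j) (c * r).
  by rewrite /cong -eqz_mod_dvd; apply/eqP.
have hx : (m%:Z %| x)%Z.
  by move/eqP: e0; rewrite eqz_mod_dvd subr0.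
have [u [v huv]] := Bezoutz x c.
rewrite gib_gcd hab in huv.
have [P hP [p0 p1]] := @gib_period m a b hm0.
set k := (j + n.+1 * P - n)%N.
have hk1 : (1 <= k)%N.
  rewrite /k subn_gt0; apply: leq_trans (leq_addl _ _).
  by rewrite -{1}[n.+1]muln1 leq_mul2l hP orbT.
have hnk : (n + k = j + n.+1 * P)%N.
  rewrite /k addnC subnK //; apply: leq_trans (leq_addl _ _).
  by apply: leq_trans (leqnSn n) _; rewrite -{1}[n.+1]muln1 leq_mul2l hP orbT.
have hper := @gib_fwdq _ _ _ _ p0 p1 n.+1 j.
rewrite -hnk (gib_shift a b n k) -/x -/c (gib_lin x c k) in hper.
have D : cong m%:Z (c * r) (x * gib 1 0 k + c * gib 0 1 k).
  apply: cong_trans hper.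
  by move: ej'; rewrite /cong -opprB rpredN.
exists k; split => //.
rewrite Fib_gib //; apply/eqP; rewrite eqz_mod_dvd.
have -> : gib 0 1 k - r = u * x * (gib 0 1 k - r)
    - v * (c * r - (x * gib 1 0 k + c * gib 0 1 k)) - v * x * gib 1 0 k.
  transitivity ((u * x + v * c) * (gib 0 1 k - r)); first by rewrite huv mul1r.
  ring.
apply: rpredB; first apply: rpredB.
- by apply: dvdz_mulr; apply: dvdz_mull.
- exact: dvdz_mull.
- by apply: dvdz_mulr; apply: dvdz_mull.
Qed.
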